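(* Suppose that for every $i\in\mathcal N$ and every $Z\in\mathcal X$, the function $c\mapsto U_i(Z+c)$ on $\mathbb R$ is continuous, strictly increasing, and satisfies $\lim_{c\to\infty}U_i(Z+c)=\infty$, and that each $U_i$ is monotone and concave. Then $\mathcal{CPO}=\bigcup_{\lambda\in\Lambda}\mathcal{CS}_\lambda$.
   Context: Let $(\Omega,\mathcal F,\mathbb P)$ be an atomless probability space and $\mathcal X:=L^\infty(\Omega,\mathcal F,\mathbb P)$. There are $n\in\mathbb N$ agents indexed by $\mathcal N=\{1,\dots,n\}$ (with $n\ge 2$), agent $i$ having initial endowment $X_i\in\mathcal X$; the aggregate endowment is $S:=\sum_{i=1}^n X_i$. The set of allocations is $\mathcal A:=\{(Y_1,\dots,Y_n)\in\mathcal X^n:\sum_{i=1}^nY_i=S\}$. Each agent $i$ has a utility functional $U_i:\mathcal X\to\mathbb R$. An allocation $(Y_i)\in\mathcal A$ is individually rational (IR) if $U_i(Y_i)\ge U_i(X_i)$ for all $i$; $\mathcal{IR}$ denotes the set of IR allocations. A random vector $(Z_1,\dots,Z_n)$ is comonotone if $(Z_i(\omega_1)-Z_i(\omega_2))(Z_j(\omega_1)-Z_j(\omega_2))\ge0$ for all $\omega_1,\omega_2\in\Omega$ and all $i,j$. $\mathcal A_C$ denotes the set of comonotone allocations in $\mathcal A$. An allocation $(Y_i^* )\in\mathcal A_C$ is comonotone Pareto optimal (CPO) if it is IR and there is no other IR allocation $(Y_i)\in\mathcal A_C$ with $U_i(Y_i)\ge U_i(Y_i^* )$ for all $i$ and at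 least one strict inequality; $\mathcal{CPO}$ denotes the set of CPO allocations. $U$ is monotone if $Z_1\le Z_2$ implies $U(Z_1)\le U(Z_2)$. Let $\Lambda:=\mathbb R_+^n\setminus\{0\}$, and for $\lambda\in\Lambda$ let $\mathcal{CS}_\lambda$ be the set of maximizers (possibly empty) of $\sup_{(Y_i)\in\mathcal{IR}\cap\mathcal A_C}\sum_{i=1}^n\lambda_iU_i(Y_i)$. *)

(* Defs.v *)
From HB Require Import structures.
From mathcomp Require Import all_boot all_order all_algebra.
From mathcomp Require Import all_classical all_reals all_analysis.
Set Implicit Arguments. Unset Strict Implicit. Unset Printing Implicit Defensive.
Import Order.TTheory GRing.Theory Num.Theory.
Import numFieldNormedType.Exports.
Local Open Scope classical_set_scope.
Local Open Scope ring_scope.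

Section Defs.
Context {R : realType} {d : measure_display} {T : measurableType d}.

Definition atomless (P : probability T R) : Prop :=
  forall A : set T, measurable A -> (0 < P A)%E ->
    exists B : set T, [/\ measurable B, B `<=` A, (0 < P B)%E & (P B < P A)%E].

(* the space X = L^infty, represented by bounded measurable random variables *)
Definition inX (Z : T -> R) : Prop :=
  measurable_fun setT Z /\ exists M : R, forall w, `|Z w| <= M.

Context {n : nat}.

Definition allocation (E Y : 'I_n -> T -> R) : Prop :=
  (forall i, inX (Y i)) /\ forall w, \sum_(i < n) Y i w = \sum_(i < n) E i w.

Definition comonotone (Y : 'I_n -> T -> R) : Prop :=
  forall (w1 w2 : T) (i j : 'I_n),
    0 <= (Y i w1 - Y i w2) * (Y j w1 - Y j w2).

Definition comon_allocation (E Y : 'I_n -> T -> R) : Prop :=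
  allocation E Y /\ comonotone Y.

Definition indiv_rational (U : 'I_n -> (T -> R) -> R) (E Y : 'I_n -> T -> R)
  : Prop := allocation E Y /\ forall i, U i (E i) <= U i (Y i).

Definition CPO (U : 'I_n -> (T -> R) -> R) (E Y : 'I_n -> T -> R) : Prop :=
  [/\ comon_allocation E Y, indiv_rational U E Y &
      ~ exists Y' : 'I_n -> T -> R,
          [/\ indiv_rational U E Y', comon_allocation E Y',
              forall i, U i (Y i) <= U i (Y' i) &
              exists i, U i (Y i) < U i (Y' i)]].

Definition in_Lambda (lam : 'I_n -> R) : Prop :=
  (forall i, 0 <= lam i) /\ exists i, lam i != 0.

Definition CS (U : 'I_n -> (T -> R) -> R) (E : 'I_n -> T -> R)
  (lam : 'I_n -> R) (Y : 'I_n -> T -> R) : Prop :=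
  [/\ indiv_rational U E Y, comon_allocation E Y &
      forall Y', indiv_rational U E Y' -> comon_allocation E Y' ->
        \sum_(i < n) lam i * U i (Y' i) <= \sum_(i < n) lam i * U i (Y i)].

End Defs.

Definition monotoneU {R : realType} {d} {T : measurableType d}
  (V : (T -> R) -> R) : Prop :=
  forall Z1 Z2, inX Z1 -> inX Z2 -> (forall w, Z1 w <= Z2 w) -> V Z1 <= V Z2.

Definition concaveU {R : realType} {d} {T : measurableType d}
  (V : (T -> R) -> R) : Prop :=
  forall Z1 Z2 (t : R), inX Z1 -> inX Z2 -> 0 <= t <= 1 ->
    t * V Z1 + (1 - t) * V Z2 <= V (fun w => t * Z1 w + (1 - t) * Z2 w).

Definition cash_regular {R : realType} {d} {T : measurableType d}
  (V : (T -> R) -> R) : Prop :=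
  forall Z, inX Z ->
    [/\ continuous (fun c : R => V (fun w => Z w + c)),
        (forall c1 c2 : R, c1 < c2 -> V (fun w => Z w + c1) < V (fun w => Z w + c2)) &
        (fun c : R => V (fun w => Z w + c)) @ +oo --> +oo].

(* Main.v *)
Require Import Defs.
From HB Require Import structures.
From mathcomp Require Import all_boot all_order all_algebra.
From mathcomp Require Import all_classical all_reals all_analysis.
From mathcomp Require Import ring lra measurable_realfun.
Import Order.TTheory GRing.Theory Num.Theory.
Import numFieldNormedType.Exports.
Local Open Scope classical_set_scope.
Local Open Scope ring_scope.

Section HB.
Variables (R : realType) (n : nat) (p : ('I_n -> R) -> R).
Hypothesis psub : forall x y, p (fun i => x i + y i) <= p x + p y.
Hypothesis phom : forall t x, 0 < t -> t * p x <= p (fun i => t * x i).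

Definition supp (k : nat) (x : 'I_n -> R) := forall i : 'I_n, (k <= i)%N -> x i = 0.

Lemma p0 : 0 <= p (fun _ => 0).
Proof.
have := psub (fun _ => 0) (fun _ => 0).
have -> : (fun i : 'I_n => (0:R) + 0) = (fun _ => 0) by apply: funext => i; rewrite addr0.
lra.
Qed.

Lemma hb_step k : (k < n)%N -> forall l : 'I_n -> R,
  (forall x, supp k x -> \sum_i l i * x i <= p x) ->
  exists l' : 'I_n -> R, forall x, supp k.+1 x -> \sum_i l' i * x i <= p x.
Proof.
move=> hk l hl; set e := Ordinal hk.
pose g (u : 'I_n -> R) := \sum_i l i * u i.
have gD u v : g (fun i => u i + v i) = g u + g v.
  by rewrite /g -big_split /=; apply: eq_bigr => i _; rewrite mulrDr.
have gZ t u : g (fun i => t * u i) = t * g u.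
  by rewrite /g mulr_sumr; apply: eq_bigr => i _; rewrite mulrCA.
pose A := [set a | exists u, supp k u /\ a = g u - p (fun i => u i - (i == e)%:R)].
have Aub v : supp k v -> ubound A (p (fun i => v i + (i == e)%:R) - g v).
  move=> sv a [u [su ->]].
  have suv : supp k (fun i => u i + v i) by move=> i hi; rewrite su // sv // addr0.
  have h1 : g (fun i => u i + v i) <= p (fun i => u i + v i) := hl _ suv.
  rewrite gD in h1.
  have := psub (fun i => u i - (i == e)%:R) (fun i => v i + (i == e)%:R).
  have -> : (fun i => u i - (i == e)%:R + (v i + (i == e)%:R)) = (fun i => u i + v i).
    by apply: funext => i; ring.
  lra.
have s0 : supp k (fun _ => 0) by [].
have An : A !=set0.
  exists (g (fun _ => 0) - p (fun i => 0 - (i == e)%:R)); exists (fun _ => 0); split => //.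
have hA : has_sup A by split => //; exists (p (fun i => 0 + (i == e)%:R) - g (fun _ => 0)); apply: Aub.
set a := sup A.
exists (fun i => if i == e then a else l i) => x sx.
pose w := fun i => if i == e then 0 else x i.
have sw : supp k w.
  move=> i hi; rewrite /w; case: eqP => // /eqP ne; apply: sx.
  by rewrite ltn_neqAle hi andbT; apply: contra ne => /eqP h; apply/eqP/val_inj.
have xE : x = (fun i => w i + x e * (i == e)%:R).
  apply: funext => i; rewrite /w; case: eqP => [->|]; first by rewrite add0r mulr1.
  by rewrite mulr0 addr0.
have sE : \sum_i (if i == e then a else l i) * x i = g w + a * x e.
  rewrite /g (bigD1 e) //= [X in _ = X + _](bigD1 e) //= /w !eqxx mulr0 add0r addrC; congr (_ + _).
  by apply: eq_bigr => i /negbTE ->.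
rewrite sE.
have [tn|tp|t0] := ltgtP (x e) 0.
-
  set s := - x e; have sp : 0 < s by rewrite /s oppr_gt0.
  pose u := fun i => s^-1 * w i.
  have su : supp k u by move=> i hi; rewrite /u sw // mulr0.
  have Au : A (g u - p (fun i => u i - (i == e)%:R)) by exists u.
  have h1 := sup_upper_bound hA Au; rewrite -/a in h1.
  have h2 := phom s (fun i => u i - (i == e)%:R) sp.
  have E1 : (fun i => s * (u i - (i == e)%:R)) = x.
    by apply: funext => i; rewrite [RHS](congr1 (fun f => f i) xE) /u /= mulrBr mulrA (divff (lt0r_neq0 sp)) mul1r /s mulNr opprK.
  rewrite E1 in h2.
  have gu : g u = s^-1 * g w by rewrite /u gZ.
  rewrite gu in h1.
  have : s * (s^-1 * g w) = g w by rewrite mulrA mulrV ?unitfE ?lt0r_neq0 // mul1r.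
  have : a * x e = - (s * a) by rewrite /s mulNr opprK mulrC.
  nra.
-
  set s := x e.
  pose v := fun i => s^-1 * w i.
  have sv : supp k v by move=> i hi; rewrite /v sw // mulr0.
  have h1 := ge_sup An (Aub v sv); rewrite -/a in h1.
  have h2 := phom s (fun i => v i + (i == e)%:R) tp.
  have E1 : (fun i => s * (v i + (i == e)%:R)) = x.
    by apply: funext => i; rewrite [RHS](congr1 (fun f => f i) xE) /v /= mulrDr mulrA (divff (lt0r_neq0 tp)) mul1r.
  rewrite E1 in h2.
  have gv : g v = s^-1 * g w by rewrite /v gZ.
  rewrite gv in h1.
  have : s * (s^-1 * g w) = g w by rewrite mulrA mulrV ?unitfE ?lt0r_neq0 // mul1r.
  have h3 := ler_wpM2l (ltW tp) h1; rewrite mulrBr -/s in h3.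
  lra.
- rewrite t0 mulr0 addr0.
  have -> : x = w by rewrite xE; apply: funext => i; rewrite t0 mul0r addr0.
  exact: hl.
Qed.

Lemma hb : exists l : 'I_n -> R, forall x, \sum_i l i * x i <= p x.
Proof.
suff H : forall k, exists l : 'I_n -> R, forall x, supp k x -> \sum_i l i * x i <= p x.
  have [l hl] := H n; exists l => x; apply: hl => i; by rewrite leqNgt ltn_ord.
elim=> [|k [l hl]].
  exists (fun _ => 0) => x sx.
  have -> : x = (fun _ => 0) by apply: funext => i; apply: sx.
  rewrite big1 ?p0 // => i _; rewrite mulr0 //.
case: (ltnP k n) => hk; first exact: (@hb_step k hk l hl).
exists l => x sx; apply: hl => i hi; by have := leq_trans hk hi; rewrite leqNgt ltn_ord.
Qed.
End HB.

Lemma sep (R : realType) (n : nat) (C : set ('I_n -> R)) :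
 (forall x y, C x -> C y -> C (fun i => x i + y i)) ->
 (forall t x, 0 < t -> C x -> C (fun i => t * x i)) ->
 (forall x y, C y -> (forall i, x i <= y i) -> C x) ->
 C (fun _ => 0) ->
 ~ (exists x, C x /\ forall i, 0 < x i) ->
 exists l : 'I_n -> R, [/\ (forall i, 0 <= l i), (exists i, l i != 0) &
    forall x, C x -> \sum_i l i * x i <= 0].
Proof.
move=> Cadd Cscal Cdown C0 Cpos.
pose S (x : 'I_n -> R) := [set s | C (fun i => x i - s)].
pose p x := inf (S x).
have Sne x : S x !=set0.
  exists (\sum_i `|x i|); apply: (Cdown _ _ C0) => i.
  rewrite subr_le0 (bigD1 i) //=; apply: le_trans (ler_norm _) _.
  by rewrite lerDl sumr_ge0.
have Slb x : has_lbound (S x).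
  exists (- \sum_i `|x i|) => s Ss; rewrite leNgt; apply/negP => hs.
  apply: Cpos; exists (fun i => x i - s); split => // i.
  rewrite subr_gt0; apply: lt_le_trans hs _.
  rewrite lerNl (bigD1 i) //= -[X in X <= _]addr0 lerD //.
    by rewrite -normrN ler_norm.
  by rewrite sumr_ge0.
have pS x s : S x s -> p x <= s by move=> Ss; exact: ge_inf (Slb x) _ Ss.
have psub x y : p (fun i => x i + y i) <= p x + p y.
  have H r : S y r -> p (fun i => x i + y i) - r <= p x.
    move=> Sr; apply: lb_le_inf (Sne x) _ => s Ss.
    suff : p (fun i => x i + y i) <= s + r by lra.
    apply: pS; rewrite /S /=.
    have -> : (fun i => x i + y i - (s + r)) = (fun i => (x i - s) + (y i - r)).
      by apply: funext => i; ring.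
    exact: Cadd.
  suff : p (fun i => x i + y i) - p x <= p y by lra.
  apply: lb_le_inf (Sne y) _ => r Sr; have := H r Sr; lra.
have phom t x : 0 < t -> t * p x <= p (fun i => t * x i).
  move=> t0; apply: lb_le_inf (Sne _) _ => s Ss.
  suff h : p x <= s / t.
    by have := ler_wpM2l (ltW t0) h; rewrite mulrCA divff ?lt0r_neq0 // mulr1.
  apply: pS; rewrite /S /=.
  have -> : (fun i => x i - s / t) = (fun i => t^-1 * (t * x i - s)).
    by apply: funext => i; field; rewrite lt0r_neq0.
  by apply: Cscal; rewrite ?invr_gt0.
have [l hl] := @hb R n p psub phom.
exists l; split.
- move=> i; have Ce : C (fun j => - (j == i)%:R).
    apply: (Cdown _ _ C0) => j; rewrite oppr_le0 //.
  have h2 : p (fun j => - (j == i)%:R) <= 0.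
    by apply: pS; rewrite /S /=; apply: (Cdown _ _ Ce) => j; rewrite subr0.
  have := le_trans (hl _) h2; rewrite (bigD1 i) //= eqxx big1 => [|j /negbTE -> ]; last by rewrite oppr0 mulr0.
  by rewrite addr0 mulrN mulr1 oppr_le0.
- case: (pselect (exists i, l i != 0)) => // H; exfalso.
  have H0 i : l i = 0 by apply/eqP/negPn/negP => nz; apply: H; exists i.
  have h2 : p (fun _ => -1) <= -1.
    by apply: pS; rewrite /S /=; apply: (Cdown _ _ C0) => j; rewrite subrr.
  have := le_trans (hl _) h2; rewrite big1 => [|i _]; last by rewrite H0 mul0r.
  lra.
- move=> x Cx; apply: le_trans (hl x) _; apply: pS; rewrite /S /=.
  by apply: (Cdown _ _ Cx) => j; rewrite subr0.
Qed.

Set Implicit Arguments. Unset Strict Implicit.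

Lemma cont_ex (R : realType) (V : R -> R) (z : R) :
  continuous V -> z < V 0 -> exists c, 0 < c /\ z < V (- c).
Proof.
move=> cV zV.
have H : \forall t \near (0:R), z < V t by exact: (cvgr_gt (V 0) (cV 0) z zV).
have [e /= e0 He] := (nbhs_ballP _ _).1 H.
exists (e / 2); split; first by rewrite divr_gt0.
by apply: He; rewrite /ball /= sub0r !normrN ger0_norm; lra.
Qed.

Section X.
Context (R : realType) (d : measure_display) (T : measurableType d).
Lemma inX_lin (Z1 Z2 : T -> R) (a b : R) : inX Z1 -> inX Z2 -> inX (fun w => a * Z1 w + b * Z2 w).
Proof.
move=> [m1 [M1 h1]] [m2 [M2 h2]]; split.
  apply: measurable_funD; apply: measurable_funM => //; exact: measurable_cst.
exists (`|a| * M1 + `|b| * M2) => w.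
apply: le_trans (ler_normD _ _) _; rewrite !normrM; apply: lerD; exact: ler_wpM2l.
Qed.
Lemma inX_shift (Z : T -> R) c : inX Z -> inX (fun w => Z w + c).
Proof.
move=> [m [M h]]; split.
  apply: measurable_funD => //; exact: measurable_cst.
exists (M + `|c|) => w; apply: le_trans (ler_normD _ _) _; exact: lerD.
Qed.
End X.

Lemma comon_sign (R : realType) n (a : 'I_n -> R) : (forall i j, 0 <= a i * a j) ->
  (0 <= \sum_i a i -> forall i, 0 <= a i) /\ (\sum_i a i <= 0 -> forall i, a i <= 0).
Proof.
move=> hA; split => hs i; rewrite leNgt; apply/negP => hi.
- have hj j : a j <= 0 by have := hA i j; nra.
  have : \sum_(j | j != i) a j <= 0 by apply: sumr_le0 => j _; apply: hj.
  move: hs; rewrite (bigD1 i) //=; lra.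
- have hj j : 0 <= a j by have := hA i j; nra.
  have : 0 <= \sum_(j | j != i) a j by apply: sumr_ge0 => j _; apply: hj.
  move: hs; rewrite (bigD1 i) //=; lra.
Qed.

Section M.
Context (R : realType) (d : measure_display) (T : measurableType d) (n : nat).
Implicit Types (E Y : 'I_n -> T -> R).

Definition combY (t : R) (Y1 Y2 : 'I_n -> T -> R) : 'I_n -> T -> R :=
  fun i w => t * Y1 i w + (1 - t) * Y2 i w.

Lemma comb_alloc E Y1 Y2 t : allocation E Y1 -> allocation E Y2 ->
  allocation E (combY t Y1 Y2).
Proof.
move=> [i1 s1] [i2 s2]; split; first by move=> i; apply: inX_lin.
move=> w; rewrite /combY big_split /= -!mulr_sumr s1 s2; ring.
Qed.

Lemma comb_comon E Y1 Y2 t : 0 <= t <= 1 -> comon_allocation E Y1 -> comon_allocation E Y2 ->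
  comonotone (combY t Y1 Y2).
Proof.
move=> /andP [t0 t1] [[_ s1] c1] [[_ s2] c2] w1 w2 i j.
pose a k := Y1 k w1 - Y1 k w2; pose b k := Y2 k w1 - Y2 k w2.
have ha := @comon_sign R n (fun k => Y1 k w1 - Y1 k w2) (fun k k' => c1 w1 w2 k k').
have hb := @comon_sign R n (fun k => Y2 k w1 - Y2 k w2) (fun k k' => c2 w1 w2 k k').
have sa : \sum_k (Y1 k w1 - Y1 k w2) = \sum_k E k w1 - \sum_k E k w2 by rewrite sumrB !s1.
have sb : \sum_k (Y2 k w1 - Y2 k w2) = \sum_k E k w1 - \sum_k E k w2 by rewrite sumrB !s2.
rewrite sa in ha; rewrite sb in hb.
have -> : (combY t Y1 Y2 i w1 - combY t Y1 Y2 i w2) * (combY t Y1 Y2 j w1 - combY t Y1 Y2 j w2)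
  = (t * a i + (1 - t) * b i) * (t * a j + (1 - t) * b j) by rewrite /combY /a /b; ring.
rewrite /a /b.
case/orP: (le_total 0 (\sum_k E k w1 - \sum_k E k w2)) => hD.
- have := ha.1 hD i; have := ha.1 hD j; have := hb.1 hD i; have := hb.1 hD j.
  move=> h1 h2 h3 h4; apply: mulr_ge0; nra.
- have := ha.2 hD i; have := ha.2 hD j; have := hb.2 hD i; have := hb.2 hD j.
  move=> h1 h2 h3 h4; apply: mulr_le0; nra.
Qed.

Definition shiftY (Y : 'I_n -> T -> R) (k j : 'I_n) (c : R) : 'I_n -> T -> R :=
  fun i w => Y i w + ((i == k)%:R - (i == j)%:R) * c.

Lemma shift_comon E Y k j c : comon_allocation E Y -> comon_allocation E (shiftY Y k j c).
Proof.
move=> [[iY sY] cY]; split; first split.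
- by move=> i; apply: inX_shift.
- move=> w; rewrite /shiftY big_split /= sY -mulr_suml sumrB.
  have s1 (m : 'I_n) : \sum_i (i == m)%:R = 1 :> R.
    by rewrite (bigD1 m) //= eqxx big1 ?addr0 // => i /negbTE ->.
  by rewrite !s1 subrr mul0r addr0.
- move=> w1 w2 i i'; rewrite /shiftY.
  have -> : forall x y z : R, x + z - (y + z) = x - y by move=> x y z; ring.
  have -> : forall x y z : R, x + z - (y + z) = x - y by move=> x y z; ring.
  exact: cY.
Qed.

Lemma shiftYk Y k j c : k != j -> shiftY Y k j c k = (fun w => Y k w + c).
Proof. by move=> kj; apply: funext => w; rewrite /shiftY eqxx (negbTE kj) subr0 mul1r. Qed.
Lemma shiftYj Y k j c : k != j -> shiftY Y k j c j = (fun w => Y j w + - c).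
Proof. by move=> kj; apply: funext => w; rewrite /shiftY eqxx eq_sym (negbTE kj) sub0r mulN1r. Qed.
Lemma shiftYo Y k j c i : i != k -> i != j -> shiftY Y k j c i = Y i.
Proof. by move=> ik ij; apply: funext => w; rewrite /shiftY (negbTE ik) (negbTE ij) subr0 mul0r addr0. Qed.
End M.

Unset Implicit Arguments. Set Strict Implicit.

Theorem mainTheorem3 (R : realType) (d : measure_display) (T : measurableType d)
  (P : probability T R) (n : nat) (E : 'I_n -> T -> R)
  (U : 'I_n -> (T -> R) -> R) :
  atomless P -> (2 <= n)%N ->
  (forall i, inX (E i)) ->
  (forall i, cash_regular (U i)) ->
  (forall i, monotoneU (U i)) ->
  (forall i, concaveU (U i)) ->
  forall Y : 'I_n -> T -> R,
    CPO U E Y <-> exists lam : 'I_n -> R, in_Lambda lam /\ CS U E lam Y.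
Proof.
move=> _ n2 _ hcr _ hcc Y; split.
- case=> cY irY nY.
  pose C (z : 'I_n -> R) := exists t, 0 <= t /\ exists Y',
    [/\ indiv_rational U E Y', comon_allocation E Y' &
        forall i, z i <= t * (U i (Y' i) - U i (Y i))].
  have C0 : C (fun _ => 0).
    by exists 0; split => //; exists Y; split => // i; rewrite mul0r.
  have Cdown x y : C y -> (forall i, x i <= y i) -> C x.
    move=> [t [t0 [Y' [h1 h2 h3]]]] hxy; exists t; split => //; exists Y'; split => // i.
    exact: le_trans (hxy i) (h3 i).
  have Cscal t x : 0 < t -> C x -> C (fun i => t * x i).
    move=> tp [t' [t0 [Y' [h1 h2 h3]]]]; exists (t * t'); split; first exact: mulr_ge0 (ltW tp) t0.
    exists Y'; split => // i /=; rewrite -mulrA; apply: ler_wpM2l; [exact: ltW | exact: h3].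
  have Cadd x y : C x -> C y -> C (fun i => x i + y i).
    move=> [t1 [t10 [Y1 [a1 b1 c1]]]] [t2 [t20 [Y2 [a2 b2 c2]]]].
    have [Tz|Tp] := eqVneq (t1 + t2) 0.
      have e1 : t1 = 0 by lra.
      have e2 : t2 = 0 by lra.
      apply: (Cdown _ _ C0) => i /=; have := c1 i; have := c2 i; rewrite e1 e2 !mul0r; lra.
    have Tp' : 0 < t1 + t2 by rewrite lt_def Tp /=; lra.
    set th := t1 / (t1 + t2).
    have th0 : 0 <= th <= 1.
      apply/andP; split; first by apply: divr_ge0; lra.
      by rewrite ler_pdivrMr // mul1r; lra.
    have e1 : t1 = (t1 + t2) * th by rewrite /th mulrCA divff // mulr1.
    have e2 : t2 = (t1 + t2) * (1 - th) by rewrite mulrBr mulr1 -e1; ring.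
    exists (t1 + t2); split; first lra.
    exists (combY th Y1 Y2); split.
    + split; first exact: comb_alloc a1.1 a2.1.
      move=> i; have q3 := hcc i (Y1 i) (Y2 i) th ((a1.1).1 i) ((a2.1).1 i) th0.
      have q1 := a1.2 i; have q2 := a2.2 i; move/andP: th0 => [h0 h1].
      have h1' : 0 <= 1 - th by lra.
      rewrite /combY; apply: le_trans q3.
      have := ler_wpM2l h0 q1; have := ler_wpM2l h1' q2; lra.
    + split; [exact: comb_alloc a1.1 a2.1 | exact: comb_comon th0 b1 b2].
    + move=> i /=; have := hcc i (Y1 i) (Y2 i) th ((a1.1).1 i) ((a2.1).1 i) th0.
      rewrite /combY => q; have := ler_wpM2l (ltW Tp') q.
      have := c1 i; have := c2 i; rewrite {1}e1 {1}e2 => q1 q2 q3.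
      nra.
  have Cpos : ~ (exists x, C x /\ forall i, 0 < x i).
    move=> [x [[t [t0 [Y' [h1 h2 h3]]]] xp]]; apply: nY; exists Y'; split => //.
    - move=> i; have := xp i; have := h3 i; nra.
    - have i0 : (0 < n)%N by apply: leq_trans n2.
      exists (Ordinal i0); have := xp (Ordinal i0); have := h3 (Ordinal i0); nra.
  have [l [l0 [k lk] lC]] := @sep R n C Cadd Cscal Cdown C0 Cpos.
  exists l; split; first by split => //; exists k.
  split => // Y' h1 h2.
  have : C (fun i => U i (Y' i) - U i (Y i)).
    by exists 1; split => //; exists Y'; split => // i; rewrite mul1r.
  move/lC; under eq_bigr do rewrite mulrBr.
  rewrite sumrB; lra.
- move=> [lam [[lam0 [k0 lk0]] [irY cY hmax]]].
  split => //.
  move=> [Y' [irY' cY' hle [j hj]]].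
  suff [Y'' [irY'' cY'' hge [k hk]]] : exists Y'', [/\ indiv_rational U E Y'',
      comon_allocation E Y'',
      (forall i, lam i * U i (Y i) <= lam i * U i (Y'' i)) &
      exists k, lam k * U k (Y k) < lam k * U k (Y'' k)].
    have := hmax Y'' irY'' cY''; rewrite leNgt => /negP; apply.
    rewrite (bigD1 k) //= [X in _ < X](bigD1 k) //=.
    apply: ltr_leD hk _; apply: ler_sum => i _; exact: hge i.
  have [lj|lj] := eqVneq (lam j) 0; last first.
    have ljp : 0 < lam j by rewrite lt_def lj lam0.
    exists Y'; split => //; first by move=> i; apply: ler_wpM2l; [exact: lam0 | exact: hle].
    by exists j; rewrite ltr_pM2l.
  have kj : k0 != j by apply/eqP => e; move: lk0; rewrite e lj eqxx.
  have lkp : 0 < lam k0 by rewrite lt_def lk0 lam0.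
  have [cj sj _] := hcr j (Y' j) ((irY'.1).1 j).
  have V0 : (fun w => Y' j w + 0) = Y' j by apply: funext => w; rewrite addr0.
  have zV : U j (E j) < (fun c => U j (fun w => Y' j w + c)) 0.
    by rewrite /= V0; apply: le_lt_trans (irY.2 j) hj.
  have [c [c0 hc]] := cont_ex cj zV.
  have [ck sk _] := hcr k0 (Y' k0) ((irY'.1).1 k0).
  have V0k : (fun w => Y' k0 w + 0) = Y' k0 by apply: funext => w; rewrite addr0.
  have hk : U k0 (Y' k0) < U k0 (shiftY Y' k0 j c k0).
    by rewrite shiftYk // -{1}V0k; apply: sk.
  have cs := shift_comon k0 j c cY'.
  exists (shiftY Y' k0 j c); split => //.
  - split; first exact: cs.1.
    move=> i; case: (eqVneq i k0) => [->|ik].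
      apply: le_trans (irY'.2 k0) (ltW hk).
    case: (eqVneq i j) => [->|ij]; first by rewrite shiftYj //; apply: ltW; exact: hc.
    by rewrite shiftYo //; exact: irY'.2.
  - move=> i; case: (eqVneq i k0) => [->|ik].
      by apply: ler_wpM2l; [exact: lam0 | apply: le_trans (hle k0) (ltW hk)].
    case: (eqVneq i j) => [->|ij]; first by rewrite lj !mul0r.
    by rewrite shiftYo //; apply: ler_wpM2l; [exact: lam0 | exact: hle].
  - by exists k0; rewrite ltr_pM2l //; apply: le_lt_trans (hle k0) hk.
Qed.
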